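(* Let $\mu$ be a differentiable growth rate and $\gamma\in\mathbb R$. If the system $x'=(A(t)-\gamma\frac{\mu'(t)}{\mu(t)}I)x$ admits a nonuniform $\mu$-dichotomy with invariant projections $P(t)$, then $\mathcal U_\gamma=\{(s,\xi):\xi\in\operatorname{Im}P(s)\}$, $\mathcal V_\gamma=\{(s,\xi):\xi\in\operatorname{Ker}P(s)\}$, and $\mathcal U_\gamma\oplus\mathcal V_\gamma=\mathbb R\times\mathbb R^n$.
   Context: Fix $n\ge1$ and a norm on $\mathbb R^n$ with induced operator norm. Let $A:\mathbb R\to M_n(\mathbb R)$ be continuous with evolution operator $\Phi(t,s)$. $\operatorname{sign}(s)\in\{-1,0,1\}$ is the sign of $s$. A growth rate is a strictly increasing $\mu:\mathbb R\to(0,\infty)$, $\mu(0)=1$, $\mu\to+\infty$ at $+\infty$, $\mu\to0$ at $-\infty$; differentiable growth rate if differentiable. A linear system $x'=C(t)x$ with evolution operator $\Psi$ admits a nonuniform $\mu$-dichotomy with invariant projections $P(t)$ if $P(t)$ are projections with $P(t)\Psi(t,s)=\Psi(t,s)P(s)$ for all $t,s$ and there are constants $K\ge1$, $\alpha<0$, $\beta>0$, $\theta,\nu\ge0$, $\alpha+\theta<0$, $\beta-\nu>0$ with ($Q=I-P$) $\|\Psi(t,s)P(s)\|\le K(\mu(t)/\mu(s))^{\alpha}\mu(s)^{\operatorname{sign}(s)\theta}$ for $t\ge s$ and $\|\Psi(t,s)Q(s)\|\le K(\mu(t)/\mu(s))^{\beta}\mu(s)^{\operatorname{sign}(s)\nu}$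 for $t\le s$. $\mathcal U_\gamma=\{(s,\xi):\sup_{t\ge0}\|\Phi(t,s)\xi\|\mu(t)^{-\gamma}<\infty\}$ and $\mathcal V_\gamma=\{(s,\xi):\sup_{t\le0}\|\Phi(t,s)\xi\|\mu(t)^{-\gamma}<\infty\}$ ($\Phi$ is the evolution operator of $x'=A(t)x$). The sum $\mathcal U\oplus\mathcal V$ of subsets of $\mathbb R\times\mathbb R^n$ is taken fiberwise: $\{(s,\xi):\xi\in\mathcal U(s)+\mathcal V(s)\}$ with $\mathcal U(s)\cap\mathcal V(s)=\{0\}$, where $\mathcal U(s)=\{\xi:(s,\xi)\in\mathcal U\}$. *)

(* Defs.v *)
From HB Require Import structures.
From mathcomp Require Import all_boot all_order all_algebra.
From mathcomp Require Import all_classical all_reals all_analysis.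
Set Implicit Arguments. Unset Strict Implicit. Unset Printing Implicit Defensive.
Import Order.TTheory GRing.Theory Num.Theory.
Import numFieldNormedType.Exports.
Local Open Scope classical_set_scope.
Local Open Scope ring_scope.

Definition is_norm (R : realType) (n : nat) (N : 'cV[R]_n -> R) : Prop :=
  (forall x, 0 <= N x) /\ (forall x, N x = 0 -> x = 0) /\
  (forall (a : R) x, N (a *: x) = `|a| * N x) /\
  (forall x y, N (x + y) <= N x + N y).

Definition opnorm (R : realType) (n : nat) (N : 'cV[R]_n -> R) (M : 'M[R]_n) : R :=
  sup [set N (M *m x) | x in [set x | N x <= 1]].

Definition growth_rate (R : realType) (mu : R -> R) : Prop :=
  (forall s t, s < t -> mu s < mu t) /\ (forall t, 0 < mu t) /\ mu 0 = 1 /\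
  (mu x @[x --> +oo] --> +oo) /\ (mu x @[x --> -oo] --> 0).

Definition diff_growth_rate (R : realType) (mu : R -> R) : Prop :=
  growth_rate mu /\ forall t : R, derivable mu t (1 : R).

Definition is_evol_op (R : realType) (n : nat) (A : R -> 'M[R]_n)
  (Phi : R -> R -> 'M[R]_n) : Prop :=
  forall s, Phi s s = 1%:M /\
   forall (t : R) (i j : 'I_n), is_derive t (1 : R) (fun u => Phi u s i j) ((A t *m Phi t s) i j).

Definition sgnR (R : realType) (s : R) : R := Num.sg s.

Definition nonuniform_mu_dichotomy (R : realType) (n : nat) (N : 'cV[R]_n -> R)
  (mu : R -> R) (Psi : R -> R -> 'M[R]_n) (P : R -> 'M[R]_n) : Prop :=
  (forall t, P t *m P t = P t) /\
  (forall t s, P t *m Psi t s = Psi t s *m P s) /\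
  exists K alpha beta theta nu : R,
    1 <= K /\ alpha < 0 /\ 0 < beta /\ 0 <= theta /\ 0 <= nu /\
    alpha + theta < 0 /\ 0 < beta - nu /\
    (forall t s, s <= t ->
       opnorm N (Psi t s *m P s) <=
       K * ((mu t / mu s) `^ alpha) * (mu s `^ (sgnR s * theta))) /\
    (forall t s, t <= s ->
       opnorm N (Psi t s *m (1%:M - P s)) <=
       K * ((mu t / mu s) `^ beta) * (mu s `^ (sgnR s * nu))).

Definition U_set (R : realType) (n : nat) (N : 'cV[R]_n -> R) (mu : R -> R)
  (Phi : R -> R -> 'M[R]_n) (gamma : R) : set (R * 'cV[R]_n) :=
  [set p | exists C : R, forall t, 0 <= t ->
      N (Phi t p.1 *m p.2) * (mu t `^ (- gamma)) <= C].

Definition V_set (R : realType) (n : nat) (N : 'cV[R]_n -> R) (mu : R -> R)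
  (Phi : R -> R -> 'M[R]_n) (gamma : R) : set (R * 'cV[R]_n) :=
  [set p | exists C : R, forall t, t <= 0 ->
      N (Phi t p.1 *m p.2) * (mu t `^ (- gamma)) <= C].

Definition fiber_dsum (R : realType) (n : nat) (U V : set (R * 'cV[R]_n))
  : set (R * 'cV[R]_n) :=
  [set p | (forall x, U (p.1, x) -> V (p.1, x) -> x = 0) /\
           exists u v, U (p.1, u) /\ V (p.1, v) /\ p.2 = u + v].

(* Main.v *)
Require Import Defs.
From HB Require Import structures.
From mathcomp Require Import all_boot all_order all_algebra.
From mathcomp Require Import all_classical all_reals all_analysis.
From mathcomp Require Import lra ring.
Import Order.TTheory GRing.Theory Num.Theory.
Import numFieldNormedType.Exports.
Local Open Scope classical_set_scope.
Local Open Scope ring_scope.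
Set Implicit Arguments. Unset Strict Implicit. Unset Printing Implicit Defensive.



Section Norms.
Variables (R : realType) (n : nat) (N : 'cV[R]_n -> R).
Hypothesis hN : is_norm N.

Lemma N_ge0 x : 0 <= N x. Proof. by have [h1 [h2 [h3 h4]]] := hN. Qed.
Lemma N_eq0 x : N x = 0 -> x = 0. Proof. by have [h1 [h2 [h3 h4]]] := hN; apply: h2. Qed.
Lemma NZ a x : N (a *: x) = `|a| * N x. Proof. by have [h1 [h2 [h3 h4]]] := hN. Qed.
Lemma N_tri x y : N (x + y) <= N x + N y. Proof. by have [h1 [h2 [h3 h4]]] := hN. Qed.
Lemma N0 : N 0 = 0. Proof. by rewrite -(scale0r 0) NZ normr0 mul0r. Qed.
Lemma NN x : N (- x) = N x.
Proof. by rewrite -scaleN1r NZ normrN normr1 mul1r. Qed.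
Lemma N_sum m (f : 'I_m -> 'cV[R]_n) : N (\sum_(j < m) f j) <= \sum_(j < m) N (f j).
Proof.
elim/big_ind2: _ => [|a b c d h1 h2|//]; first by rewrite N0.
by apply: le_trans (N_tri _ _) _; apply: lerD.
Qed.

Lemma mx_entry_le (p q : nat) (x : 'M[R]_(p, q)) i j : `|x i j| <= `|x|.
Proof.
change (`|x i j| <= mx_norm x); rewrite mx_normrE; apply/bigmax_geP; right => /=.
by exists (i, j).
Qed.

Lemma mx_normT_le (p q : nat) (x : 'M[R]_(p, q)) : `|x^T| <= `|x|.
Proof.
change (mx_norm x^T <= `|x|); rewrite mx_normrE.
apply/bigmax_leP; split; first exact: normr_ge0.
by move=> [i j] _ /=; rewrite mxE mx_entry_le.
Qed.

Definition Sc := \sum_(i < n) N (delta_mx i 0).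

Lemma N_upper (x : 'cV[R]_n) : N x <= `|x| * Sc.
Proof.
rewrite {1}(matrix_sum_delta x) /Sc mulr_sumr.
apply: (le_trans (N_sum _)); apply: ler_sum => i _.
rewrite big_ord1 NZ; apply: ler_wpM2r; first exact: N_ge0.
exact: mx_entry_le.
Qed.

Lemma Sc_ge0 : 0 <= Sc. Proof. by apply: sumr_ge0 => i _; apply: N_ge0. Qed.

Definition Nr (v : 'rV[R]_n) := N (v^T).

Lemma Nr_cont : continuous Nr.
Proof.
move=> x; apply/(@cvgrPdist_lt _ _ _ (nbhs x) (nbhs_filter x)) => e e0.
have : (e / (Sc + 1)) > 0 by rewrite divr_gt0 // ltr_wpDl ?Sc_ge0.
have /(@cvgrPdist_lt _ _ _ (nbhs x) (nbhs_filter x)) H0 := @cvg_id _ (nbhs x).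
move=> /H0.
apply: filterS => y /= hy.
have key : forall a b : 'rV[R]_n, Nr a - Nr b <= `|a - b| * Sc.
  move=> a b; rewrite lerBlDr /Nr.
  have -> : a^T = (a - b)^T + b^T by rewrite -linearD /= subrK.
  apply: le_trans (N_tri _ _) _; apply: lerD => //.
  apply: le_trans (N_upper _) _; apply: ler_wpM2r; first exact: Sc_ge0.
  exact: mx_normT_le.
have h1 : `|Nr x - Nr y| <= `|x - y| * Sc.
  rewrite ler_norml key andbT lerNl opprB.
  by apply: le_trans (key _ _) _; rewrite -normrN opprB.
apply: (le_lt_trans h1).
have [->|xy0] := eqVneq `|x - y| 0; first by rewrite mul0r.
apply: (@le_lt_trans _ _ (`|x - y| * (Sc + 1))); first by rewrite ler_wpM2l // lerDl.
by rewrite -ltr_pdivlMr // ltr_wpDl ?Sc_ge0.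
Qed.

Lemma N_lower : (0 < n)%N ->
  exists2 m, 0 < m & forall (x : 'cV[R]_n) i, m * `|x i 0| <= N x.
Proof.
move=> n0.
pose S := [set v : 'rV[R]_n | `|v| = 1].
have cS : compact S.
  apply: bounded_closed_compact.
    apply: filterS (nbhs_pinfty_ge (num_real (1:R))) => M M1 v /= ->.
    exact: M1.
  apply: (@preimage_closed _ R (fun v : 'rV[R]_n => `|v|) [set x | x = 1]); last exact: closed_eq.
  move=> v _.
  exact: norm_continuous.
pose w : 'rV[R]_n := const_mx 1.
have w0 : `|w| != 0.
  rewrite normr_eq0; apply/negP => /eqP /matrixP /(_ ord0 (Ordinal n0)).
  by rewrite !mxE => /eqP; rewrite oner_eq0.
have S0 : S !=set0.
  exists (`|w|^-1 *: w); rewrite /S /= normrZ ger0_norm ?invr_ge0 //.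
  by rewrite mulVf.
have [c cS' cmin] := compact_EVT_min S0 cS (continuous_subspaceT Nr_cont).
have Sc1 : `|c| = 1 by move: cS'; rewrite inE.
have mpos : 0 < Nr c.
  rewrite lt_def N_ge0 andbT; apply/eqP => /N_eq0 /eqP.
  rewrite trmx_eq0 => /eqP c0; move: Sc1; rewrite c0 normr0 => /eqP.
  by rewrite eq_sym oner_eq0.
exists (Nr c) => // x i.
pose v := x^T.
have [v0|v0] := eqVneq `|v| 0.
  have -> : x i 0 = 0.
    have := mx_entry_le v 0 i; rewrite v0 mxE normr_le0 => /eqP //.
  by rewrite normr0 mulr0 N_ge0.
have := cmin (`|v|^-1 *: v); rewrite inE => /(_ _) hm.
have {}hm : Nr c <= Nr (`|v|^-1 *: v).
  apply: hm; rewrite /S /= normrZ ger0_norm ?invr_ge0 //.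
  by rewrite mulVf.
have e1 : `|x i 0| <= `|v| by have := mx_entry_le v 0 i; rewrite mxE.
apply: (le_trans (ler_wpM2l (ltW mpos) e1)).
move: hm; rewrite /Nr linearZ /= trmxK NZ ger0_norm ?invr_ge0 //.
rewrite [_^-1 * _]mulrC. move=> h. rewrite -ler_pdivlMr. exact: h. by rewrite lt_def v0 normr_ge0.
Qed.

Lemma N_mulmx_le (n0 : (0 < n)%N) : exists2 m, 0 < m &
  forall (M : 'M[R]_n) x, N (M *m x) <= (\sum_(j < n) N (col j M)) / m * N x.
Proof.
have [m m0 hm] := N_lower n0; exists m => // M x.
have -> : M *m x = \sum_j x j 0 *: col j M.
  apply/matrixP => i k; rewrite !mxE summxE; apply: eq_bigr => j _.
  by rewrite !mxE (ord1 k) mulrC.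
apply: (le_trans (N_sum _)).
rewrite !mulr_suml; apply: ler_sum => j _.
rewrite NZ -mulrA [_ * N (col j M)]mulrC; apply: ler_wpM2l; first exact: N_ge0.
by rewrite mulrC ler_pdivlMr // mulrC hm.
Qed.

Lemma opnorm_le (n0 : (0 < n)%N) (M : 'M[R]_n) x :
  N (M *m x) <= opnorm N M * N x.
Proof.
have [m m0 hm] := N_mulmx_le n0.
set B := [set N (M *m y) | y in [set y | N y <= 1]].
have hB : has_sup B.
  split; first by exists (N (M *m 0)), 0 => //=; rewrite N0 ler01.
  exists ((\sum_(j < n) N (col j M)) / m) => _ [y /= y1 <-].
  apply: (le_trans (hm M y)); rewrite -{2}(mulr1 (_ / _)).
  apply: ler_wpM2l => //; apply: divr_ge0 (ltW m0).
  by apply: sumr_ge0 => j _; exact: N_ge0.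
have [x0|x0] := eqVneq (N x) 0.
  by rewrite (N_eq0 x0) mulmx0 N0 mulr0.
have Nx0 : 0 < N x by rewrite lt_def x0 N_ge0.
have : B (N (M *m ((N x)^-1 *: x))).
  exists ((N x)^-1 *: x) => //=; rewrite NZ ger0_norm ?invr_ge0 ?N_ge0 //.
  by rewrite mulVf.
move=> /(sup_upper_bound hB).
rewrite -scalemxAr NZ ger0_norm ?invr_ge0 ?N_ge0 // mulrC -ler_pdivlMr //.
  by rewrite invrK. by rewrite invr_gt0.
Qed.

End Norms.



Lemma is_derive_comp1 (R : realType) (f g : R -> R) (x df dg : R) :
  is_derive x 1 f df -> is_derive (f x) 1 g dg -> is_derive x 1 (g \o f) (dg * df).
Proof.
move=> [df1 dfv] [dg1 dgv]; apply: DeriveDef.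
  by apply/derivable1_diffP; apply: differentiable_comp; apply/derivable1_diffP.
by rewrite -derive1E derive1_comp // !derive1E dfv dgv.
Qed.

Section ODE.
Variables (R : realType) (n : nat) (A : R -> 'M[R]_n).
Hypothesis hA : forall i j, continuous (fun t => A t i j).
Variable X : R -> 'M[R]_n.
Hypothesis hX : forall (t : R) i j, is_derive t (1:R) (fun u => X u i j) ((A t *m X t) i j).

Definition fX u := \sum_(i < n) \sum_(j < n) (X u i j) ^+ 2.
Definition dfX u := \sum_(i < n) \sum_(j < n) (2 * X u i j * (A u *m X u) i j).

Lemma fX_derive (u : R) : is_derive u (1:R) fX (dfX u).
Proof.
have -> : fX = \sum_(i < n) \sum_(j < n) (fun u => X u i j) ^+ 2.
  by apply/funext => v; rewrite /fX fct_sumE; apply: eq_bigr => i _; rewrite fct_sumE.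
apply: is_derive_sum => i; apply: is_derive_sum => j.
Qed.

Lemma fX_ge0 u : 0 <= fX u.
Proof. by apply: sumr_ge0 => i _; apply: sumr_ge0 => j _; apply: sqr_ge0. Qed.

Lemma sq_le_fX u i j : X u i j ^+ 2 <= fX u.
Proof.
rewrite /fX (bigD1 i) //= (bigD1 j) //= -addrA lerDl addr_ge0 //.
  by apply: sumr_ge0 => k _; apply: sqr_ge0.
by apply: sumr_ge0 => k _; apply: sumr_ge0 => l _; apply: sqr_ge0.
Qed.

Lemma prod_le_fX u i j k l : `|X u i j| * `|X u k l| <= fX u.
Proof.
have h : `|X u i j| * `|X u k l| *+ 2 <= X u i j ^+ 2 + X u k l ^+ 2.
  rewrite -[X u i j ^+ 2]real_normK ?num_real // -[X u k l ^+ 2]real_normK ?num_real //.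
  have := sqr_ge0 (`|X u i j| - `|X u k l|).
  rewrite -mulr_natr; nra.
have h2 := lerD (sq_le_fX u i j) (sq_le_fX u k l).
have := le_trans h h2; rewrite -mulr2n.
by rewrite lerMn2r.
Qed.


Definition GA u := \sum_(i < n) \sum_(k < n) `|A u i k|.

Lemma dfX_bound u : `|dfX u| <= 2 * n%:R * GA u * fX u.
Proof.
have E : \sum_(i < n) \sum_(j < n) (2 * (\sum_(k < n) `|A u i k|) * fX u)
    = 2 * n%:R * GA u * fX u.
  under eq_bigr => i _ do rewrite sumr_const card_ord.
  by rewrite sumrMnl -mulr_suml -mulr_sumr /GA -mulr_natr; ring.
rewrite -E /dfX; apply: (le_trans (ler_norm_sum _ _ _)); apply: ler_sum => i _.
apply: (le_trans (ler_norm_sum _ _ _)); apply: ler_sum => j _.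
rewrite !normrM ger0_norm // -mulrA -[2 * _ * _]mulrA; apply: ler_wpM2l => //.
rewrite mxE; apply: (le_trans (ler_wpM2l (normr_ge0 _) (ler_norm_sum _ _ _))).
rewrite mulr_sumr mulr_suml; apply: ler_sum => k _.
rewrite normrM mulrCA; apply: ler_wpM2l; first exact: normr_ge0.
exact: prod_le_fX.
Qed.

Lemma GA_cont : continuous GA.
Proof.
have -> : GA = \sum_(i < n) \sum_(k < n) (fun u => `|A u i k|).
  by apply/funext => v; rewrite /GA fct_sumE; apply: eq_bigr => i _; rewrite fct_sumE.
elim/big_ind: _ => [|f g cf cg|i _]; first exact: cst_continuous.
  by move=> x; apply: continuousD; [exact: cf | exact: cg].
elim/big_ind: _ => [|f g cf cg|k _]; first exact: cst_continuous.
  by move=> x; apply: continuousD; [exact: cf | exact: cg].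
move=> x; apply: (@continuous_comp _ _ _ (fun u => A u i k) Num.norm).
  exact: hA.
exact: norm_continuous.
Qed.

Lemma expk_derive (k u : R) : is_derive u (1:R) (fun v => expR (k * v)) (expR (k * u) * k).
Proof.
have h1 : is_derive u (1:R) (k \*: (@id R)) (k *: (1:R)) by apply: is_deriveZ.
have := is_derive_comp1 h1 (is_derive_expR _).
have -> : (fun v => expR (k * v)) = expR \o (k \*: (@id R)) by [].
move=> h; apply: (is_derive_eq h).
by rewrite /= /GRing.scale /= mulr1.
Qed.

Definition phiX (k : R) := (fun v => expR (k * v)) * fX.

Lemma phiX_derive (k u : R) :
  is_derive u (1:R) (phiX k) (expR (k * u) * (dfX u + k * fX u)).
Proof.
apply: is_derive_eq; first exact: (is_deriveM (expk_derive k u) (fX_derive u)).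
by rewrite /= mulrDr; congr (_ + _); rewrite /GRing.scale /=; ring.
Qed.

Lemma phiX_cont k (a b : R) : {within `[a, b], continuous (phiX k)}.
Proof.
apply: derivable_within_continuous => x _.
by have [] := phiX_derive k x.
Qed.

Lemma fX0_X0 t : fX t = 0 -> X t = 0.
Proof.
move=> ft; apply/matrixP => i j; rewrite mxE; apply/eqP; rewrite -sqrf_eq0; apply/eqP.
by apply: le_anti; rewrite sqr_ge0 andbT -ft; exact: sq_le_fX.
Qed.

Lemma ode_uniq s : X s = 0 -> forall t, X t = 0.
Proof.
move=> Xs t; apply: fX0_X0.
have fs : fX s = 0.
  by rewrite /fX; apply: big1 => i _; apply: big1 => j _; rewrite Xs mxE expr0n.
have key : forall a b, a <= b -> (a = s \/ b = s) -> (t = a \/ t = b) -> fX t = 0.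
  move=> a b ab hs ht.
  have [c _ cmax] := EVT_max ab (continuous_subspaceT GA_cont).
  pose c0 := 2 * n%:R * GA c.
  have c00 : 0 <= c0.
    by rewrite /c0 !mulr_ge0 // /GA; apply: sumr_ge0 => i _; apply: sumr_ge0 => k _.
  have bnd u : u \in `]a, b[ -> `|dfX u| <= c0 * fX u.
    move=> uab; apply: (le_trans (dfX_bound u)); apply: ler_wpM2r; first exact: fX_ge0.
    rewrite /c0; apply: ler_wpM2l; first by rewrite mulr_ge0.
    apply: cmax; move: uab; rewrite !in_itv /= => /andP[h1 h2].
    by rewrite (ltW h1) (ltW h2).
  have pos_f u k : 0 <= phiX k u by rewrite /phiX /= mulr_ge0 ?expR_ge0 ?fX_ge0.
  have f0 u k : phiX k u = 0 -> fX u = 0.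
    by rewrite /phiX /= => /eqP; rewrite mulf_eq0 gt_eqF ?expR_gt0 //= => /eqP.
  case: hs => hs.
  -
    have H : phiX (- c0) b <= phiX (- c0) a.
      apply: (@ler0_derive1_nincr R (phiX (- c0)) a b _ _ (@phiX_cont (- c0) a b)) => //.
        by move=> x _; have [] := phiX_derive (- c0) x.
      move=> x xab; rewrite derive1E; have [_ ->] := phiX_derive (- c0) x.
      rewrite mulr_ge0_le0 ?expR_ge0 // mulNr subr_le0.
      exact: le_trans (ler_norm _) (bnd x xab).
    have ha : phiX (- c0) a = 0.
      by rewrite /phiX hs; change (expR (- c0 * s) * fX s = 0); rewrite fs mulr0.
    case: ht => ->; first by rewrite hs fs.
    by apply: (f0 _ (- c0)); apply: le_anti; rewrite pos_f andbT -ha.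
  -
    have H : phiX c0 a <= phiX c0 b.
      apply: (@ger0_derive1_ndecr R (phiX c0) a b _ _ (@phiX_cont c0 a b)) => //.
        by move=> x _; have [] := phiX_derive c0 x.
      move=> x xab; rewrite derive1E; have [_ ->] := phiX_derive c0 x.
      rewrite mulr_ge0 ?expR_ge0 // -lerBlDr sub0r.
      by move: (bnd x xab); rewrite ler_norml => /andP[].
    have hb : phiX c0 b = 0.
      by rewrite /phiX hs; change (expR (c0 * s) * fX s = 0); rewrite fs mulr0.
    case: ht => ->; last by rewrite hs fs.
    by apply: (f0 _ c0); apply: le_anti; rewrite pos_f andbT -hb.
have [st|ts] := lerP s t.
  by apply: (key s t st); [left|right].
by apply: (key t s (ltW ts)); [right|left].
Qed.

End ODE.



Lemma powR_div (R : realType) (x y r : R) : 0 < x -> 0 < y ->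
  (x / y) `^ r = x `^ r * y `^ (- r).
Proof.
move=> x0 y0; rewrite powRM ?invr_ge0 ?(ltW x0) ?(ltW y0) //; congr (_ * _).
rewrite /powR !gt_eqF ?invr_gt0 // lnV ?posrE //.
by rewrite mulrN mulNr.
Qed.

Lemma mu_large (R : realType) (mu : R -> R) :
  (mu x @[x --> +oo] --> +oo) -> (forall t, 0 < mu t) ->
  forall q eps T, 0 < q -> 0 < eps -> exists t, T <= t /\ mu t `^ (- q) < eps.
Proof.
move=> hmu mu0 q eps T q0 e0.
pose M := (eps^-1) `^ (q^-1).
have H1 : \forall x \near +oo, M < mu x.
  by apply: (cvgryPgt _).1 hmu M; apply: nbhs_filter.
have H2 := nbhs_pinfty_ge (num_real T).
have [t [h1 h2]] := filter_ex (filterI H1 H2); exists t; split => //.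
have M0 : 0 <= M by apply: powR_ge0.
have : M `^ q < mu t `^ q.
  by apply: gt0_ltr_powR => //; rewrite nnegrE ?ltW ?mu0.
rewrite /M -powRrM mulVf ?gt_eqF // powRr1 ?invr_ge0 ?ltW // => h.
rewrite powRN -[eps]invrK ltf_pV2 ?posrE ?invr_gt0 ?powR_gt0 //.
Qed.

Lemma mu_small (R : realType) (mu : R -> R) :
  (mu x @[x --> -oo] --> 0) -> (forall t, 0 < mu t) ->
  forall q eps T, 0 < q -> 0 < eps -> exists t, t <= T /\ mu t `^ q < eps.
Proof.
move=> hmu mu0 q eps T q0 e0.
pose M := eps `^ (q^-1).
have M0 : 0 < M by apply: powR_gt0.
have H1 : \forall t \near -oo, `|0 - mu t| < M.
  by apply: (cvgrPdist_lt _ _).1 hmu M M0; apply: nbhs_filter.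
have H2 := nbhs_ninfty_le (num_real T).
have [t [h1 h2]] := filter_ex (filterI H1 H2); exists t; split => //.
move: h1; rewrite sub0r normrN ger0_norm ?ltW ?mu0 // => h1.
have : mu t `^ q < M `^ q.
  by apply: gt0_ltr_powR => //; rewrite nnegrE ?ltW ?mu0.
by rewrite /M -powRrM mulVf ?gt_eqF // powRr1 ?ltW.
Qed.



Section Main.
Variables (R : realType) (n : nat) (N : 'cV[R]_n -> R)
  (A : R -> 'M[R]_n) (Phi Psi : R -> R -> 'M[R]_n) (P : R -> 'M[R]_n)
  (mu : R -> R) (gamma : R).
Hypothesis n0 : (0 < n)%N.
Hypothesis hN : is_norm N.
Hypothesis hA : forall i j, continuous (fun t => A t i j).
Hypothesis hPhi : is_evol_op A Phi.
Hypothesis hmu : diff_growth_rate mu.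
Hypothesis hPsi : is_evol_op (fun t => A t - (gamma * ('D_1 mu t) / mu t) *: 1%:M) Psi.
Hypothesis hPP : forall t, P t *m P t = P t.
Hypothesis hPc : forall t s, P t *m Psi t s = Psi t s *m P s.

Definition sol (X : R -> 'M[R]_n) :=
  forall (t : R) i j, is_derive t (1:R) (fun u => X u i j) ((A t *m X t) i j).

Lemma sol_Phi s : sol (fun u => Phi u s).
Proof. by move=> t i j; have [_ h] := hPhi s; apply: h. Qed.

Lemma sol_mulmx X M : sol X -> sol (fun u => X u *m M).
Proof.
move=> hX t i j.
have h : is_derive t (1:R) (\sum_(k < n) (M k j) \*: (fun u => X u i k))
    (\sum_(k < n) M k j *: (A t *m X t) i k).
  by apply: is_derive_sum => k; apply: is_deriveZ.
have -> : (fun u => (X u *m M) i j) = \sum_(k < n) (M k j) \*: (fun u => X u i k).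
  apply/funext => u; rewrite fct_sumE mxE; apply: eq_bigr => k _.
  by rewrite /= /GRing.scale /= mulrC.
apply: (is_derive_eq h); rewrite mulmxA mxE; apply: eq_bigr => k _.
by rewrite /GRing.scale /= mulrC.
Qed.

Lemma sol_sub X Y : sol X -> sol Y -> sol (fun u => X u - Y u).
Proof.
move=> hX hY t i j.
have -> : (fun u => (X u - Y u) i j) = (fun u => X u i j) - (fun u => Y u i j).
  by apply/funext => u; rewrite !mxE.
apply: is_derive_eq; first exact: is_deriveB.
by rewrite mulmxBr !mxE.
Qed.

Lemma Phi_co t s r : Phi t s *m Phi s r = Phi t r.
Proof.
have := ode_uniq hA (sol_sub (sol_mulmx (Phi s r) (sol_Phi s)) (sol_Phi r)).
move=> /(_ s) h; apply/eqP; rewrite -subr_eq0; apply/eqP; apply: h.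
by have [-> _] := hPhi s; rewrite mul1mx subrr.
Qed.

Lemma mu_gt0 t : 0 < mu t. Proof. by have [[_ [h _]] _] := hmu. Qed.
Lemma mu_0 : mu 0 = 1. Proof. by have [[_ [_ [h _]]] _] := hmu. Qed.
Lemma mu_le s t : s <= t -> mu s <= mu t.
Proof.
have [[h _] _] := hmu; rewrite le_eqVlt => /orP[/eqP -> //|/h]; exact: ltW.
Qed.

Definition e t := mu t `^ gamma.
Lemma e_gt0 t : 0 < e t. Proof. by apply: powR_gt0; exact: mu_gt0. Qed.
Lemma e_0 : e 0 = 1. Proof. by rewrite /e mu_0 powR1. Qed.

Lemma e_derive (u : R) :
  is_derive u (1:R) e (gamma * mu u `^ (gamma - 1) * 'D_1 mu u).
Proof.
have [_ hd] := hmu.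
exact: (is_derive_comp1 (derivableP (hd u)) (is_derive1_powR gamma (mu_gt0 u))).
Qed.

Lemma sol_ePsi s : sol (fun u => e u *: Psi u s).
Proof.
move=> t i j.
have -> : (fun u => (e u *: Psi u s) i j) = e * (fun u => Psi u s i j).
  by apply/funext => u; rewrite !mxE.
have [_ hd] := hPsi s.
apply: is_derive_eq; first exact: (is_deriveM (e_derive t) (hd t i j)).
rewrite -scalemxAr [in RHS]mxE mulmxBl scalemx1 mul_scalar_mx !mxE /GRing.scale /=.
have hmt := mu_gt0 t.
have -> : mu t `^ (gamma - 1) = e t / mu t.
  rewrite powRB; last by rewrite (gt_eqF hmt) implybT.
  by congr (_ / _); apply: powRr1; apply: ltW.
by field; rewrite gt_eqF.
Qed.

Lemma PsiPhi t s : e t *: Psi t s = e s *: Phi t s.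
Proof.
have hX := sol_sub (sol_ePsi s) (sol_mulmx (e s)%:M (sol_Phi s)).
have := ode_uniq hA hX (s := s); rewrite -/(e s).
move=> /(_ _ t); rewrite !mul_mx_scalar => h; apply/eqP; rewrite -subr_eq0; apply/eqP.
apply: h; have [-> _] := hPsi s; have [-> _] := hPhi s.
by rewrite subrr.
Qed.

Lemma PhiE t s : Phi t s = (e t / e s) *: Psi t s.
Proof.
apply: (@scalerI _ _ (e s)); first by rewrite gt_eqF ?e_gt0.
by rewrite -PsiPhi scalerA mulrCA mulfV ?gt_eqF ?e_gt0 // mulr1.
Qed.

Lemma P_Phi t s : P t *m Phi t s = Phi t s *m P s.
Proof. by rewrite PhiE -scalemxAr -scalemxAl hPc. Qed.

Lemma Phi_ss s : Phi s s = 1%:M. Proof. by have [] := hPhi s. Qed.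

Variables (K alpha beta theta nu : R).
Hypothesis hK : 1 <= K.
Hypothesis hal : alpha < 0.
Hypothesis hbe : 0 < beta.
Hypothesis hth : 0 <= theta.
Hypothesis hnu : 0 <= nu.
Hypothesis hat : alpha + theta < 0.
Hypothesis hbn : 0 < beta - nu.
Hypothesis hDP : forall t s, s <= t ->
       opnorm N (Psi t s *m P s) <=
       K * ((mu t / mu s) `^ alpha) * (mu s `^ (sgnR s * theta)).
Hypothesis hDQ : forall t s, t <= s ->
       opnorm N (Psi t s *m (1%:M - P s)) <=
       K * ((mu t / mu s) `^ beta) * (mu s `^ (sgnR s * nu)).

Lemma DP t s x : s <= t -> N (Psi t s *m (P s *m x)) <=
  K * ((mu t / mu s) `^ alpha) * (mu s `^ (sgnR s * theta)) * N x.
Proof.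
move=> st; rewrite mulmxA; apply: (le_trans (opnorm_le hN n0 _ _)).
by apply: ler_wpM2r; [exact: N_ge0 | exact: hDP].
Qed.

Lemma DQ t s x : t <= s -> N (Psi t s *m ((1%:M - P s) *m x)) <=
  K * ((mu t / mu s) `^ beta) * (mu s `^ (sgnR s * nu)) * N x.
Proof.
move=> st; rewrite mulmxA; apply: (le_trans (opnorm_le hN n0 _ _)).
by apply: ler_wpM2r; [exact: N_ge0 | exact: hDQ].
Qed.

Lemma muN t : mu t `^ (- gamma) = (e t)^-1. Proof. by rewrite powRN. Qed.

Lemma NPhi_e t s x : N (Phi t s *m x) * (e t)^-1 = N (Psi t s *m x) / e s.
Proof.
rewrite PhiE -scalemxAl NZ // ger0_norm ?divr_ge0 ?ltW ?e_gt0 //.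
have := e_gt0 t; have := e_gt0 s => h1 h2.
by field; rewrite !gt_eqF.
Qed.

Lemma U_of_P s eta : exists C, forall t, 0 <= t ->
  N (Phi t s *m (P s *m eta)) * mu t `^ (- gamma) <= C.
Proof.
pose z := Phi 0 s *m eta.
exists (K * N z) => t t0.
have -> : Phi t s *m (P s *m eta) = Phi t 0 *m (P 0 *m z).
  by rewrite /z (mulmxA (P 0)) P_Phi -(mulmxA (Phi 0 s)) [RHS]mulmxA Phi_co.
rewrite muN NPhi_e e_0 divr1.
apply: (le_trans (DP _ t0)).
rewrite mu_0 divr1 powR1 mulr1; apply: ler_wpM2r; first exact: N_ge0.
rewrite -{2}(mulr1 K); apply: ler_wpM2l; first by apply: le_trans hK.
rewrite -(powRr0 (mu t)); apply: ler_powR; last exact: ltW.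
by rewrite -mu_0; apply: mu_le.
Qed.

Lemma V_of_Q s x : P s *m x = 0 -> exists C, forall t, t <= 0 ->
  N (Phi t s *m x) * mu t `^ (- gamma) <= C.
Proof.
move=> Px.
pose z := Phi 0 s *m x.
have Pz : (1%:M - P 0) *m z = z.
  by rewrite mulmxBl mul1mx /z mulmxA P_Phi -mulmxA Px mulmx0 subr0.
exists (K * N z) => t t0.
have -> : Phi t s *m x = Phi t 0 *m ((1%:M - P 0) *m z).
  by rewrite Pz /z mulmxA Phi_co.
rewrite muN NPhi_e e_0 divr1.
apply: (le_trans (DQ _ t0)).
rewrite mu_0 divr1 powR1 mulr1; apply: ler_wpM2r; first exact: N_ge0.
rewrite -{2}(mulr1 K); apply: ler_wpM2l; first by apply: le_trans hK.
have h1 : (1:R) `^ beta = 1 by rewrite powR1.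
rewrite -[leRHS]h1; apply: ge0_ler_powR; [exact: ltW | by rewrite nnegrE ltW ?mu_gt0 | by rewrite nnegrE | ].
by rewrite -mu_0; apply: mu_le.
Qed.

Lemma mu_pinfty : mu x @[x --> +oo] --> +oo.
Proof. by have [[_ [_ [_ [h _]]]] _] := hmu. Qed.
Lemma mu_ninfty : mu x @[x --> -oo] --> 0.
Proof. by have [[_ [_ [_ [_ h]]]] _] := hmu. Qed.

Lemma Nsub_le a b : N (a - b) <= N a + N b.
Proof. by rewrite -(NN hN b); apply: N_tri. Qed.

Lemma U_sub s x : (exists C, forall t, 0 <= t ->
  N (Phi t s *m x) * mu t `^ (- gamma) <= C) -> x = P s *m x.
Proof.
move=> [C hC]; have [C2 hC2] := U_of_P s x.
pose y := x - P s *m x.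
have hy t : 0 <= t -> N (Phi t s *m y) * (e t)^-1 <= C + C2.
  move=> t0; rewrite -muN mulmxBr.
  apply: le_trans (ler_wpM2r (powR_ge0 _ _) (Nsub_le _ _)) _.
  by rewrite mulrDl; apply: lerD; [exact: hC | exact: hC2].
have Py : P s *m y = 0 by rewrite mulmxBr mulmxA hPP subrr.
suff : N y = 0 by move/(N_eq0 hN)/eqP; rewrite subr_eq0 => /eqP.
case: (eqVneq (N y) 0) => // Ny0.
have Nyp : 0 < N y by rewrite lt_def Ny0 N_ge0.
pose C' := C + C2.
have K0 : 0 <= K := le_trans ler01 hK.
have es0 : 0 <= e s := ltW (e_gt0 s).
have C'0 : 0 <= C'.
  apply: le_trans (hy 0 (lexx _)); apply: mulr_ge0; first exact: N_ge0.
  by rewrite invr_ge0 ltW ?e_gt0.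
pose Kc := e s * K * mu s `^ beta * C'.
have Kc0 : 0 <= Kc.
  by rewrite /Kc !mulr_ge0 ?powR_ge0 ?K0 ?es0.
pose eps := N y / (Kc + 1).
have eps0 : 0 < eps by rewrite divr_gt0 // ltr_wpDl.
have [t [Tt ht]] := mu_large mu_pinfty mu_gt0 (Num.max s 0 + 1) hbn eps0.
have [hm1 hm2] : s <= Num.max s 0 /\ 0 <= Num.max s 0 by rewrite !le_max !lexx ?orbT.
have t0 : 0 < t.
  by apply: lt_le_trans Tt; apply: le_lt_trans hm2 _; rewrite ltrDl.
have st : s <= t.
  by apply: le_trans _ Tt; apply: le_trans hm1 _; rewrite lerDl.
pose w := Phi t s *m y.
have yw : y = Phi s t *m w by rewrite /w mulmxA Phi_co Phi_ss mul1mx.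
have Pw : (1%:M - P t) *m w = w.
  by rewrite mulmxBl mul1mx /w mulmxA P_Phi -mulmxA Py mulmx0 subr0.
have hw := hy t (ltW t0); rewrite -/w in hw.
have : N y <= Kc * mu t `^ (- (beta - nu)).
  have est : 0 <= e s / e t := divr_ge0 es0 (ltW (e_gt0 t)).
  rewrite yw -Pw PhiE -scalemxAl NZ // (ger0_norm est).
  apply: le_trans (ler_wpM2l est (DQ w st)) _.
  rewrite /sgnR gtr0_sg // mul1r powR_div ?mu_gt0 //.
  have -> : e s / e t * (K * (mu s `^ beta * mu t `^ (- beta)) * mu t `^ nu * N w) =
     (e s * K * mu s `^ beta) * (mu t `^ (- beta) * mu t `^ nu) * (N w * (e t)^-1).
    by ring.
  rewrite -powRD ?(gt_eqF (mu_gt0 t)) ?implybT // -(opprB nu beta) opprK addrC.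
  rewrite /Kc [X in _ <= X](_ : _ = (e s * K * mu s `^ beta * mu t `^ (nu - beta)) * C'); last by ring.
  apply: ler_wpM2l; last exact: hw.
  by rewrite !mulr_ge0 ?powR_ge0 ?K0 ?es0.
move=> h; have : N y < N y; last by rewrite ltxx.
apply: (le_lt_trans h).
have -> : N y = (Kc + 1) * eps by rewrite /eps mulrC divfK // gt_eqF // ltr_wpDl.
have [Kc00|Kcp] := eqVneq Kc 0; first by rewrite Kc00 mul0r add0r mul1r.
apply: (@lt_le_trans _ _ (Kc * eps)).
  by rewrite ltr_pM2l // lt_def Kcp Kc0.
by apply: ler_wpM2r; [exact: ltW | rewrite lerDl].
Qed.

Lemma V_sub s x : (exists C, forall t, t <= 0 ->
  N (Phi t s *m x) * mu t `^ (- gamma) <= C) -> P s *m x = 0.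
Proof.
move=> [C hC].
have PQ : P s *m (x - P s *m x) = 0 by rewrite mulmxBr mulmxA hPP subrr.
have [C2 hC2] := V_of_Q PQ.
pose y := P s *m x.
have hy t : t <= 0 -> N (Phi t s *m y) * (e t)^-1 <= C + C2.
  move=> t0; rewrite -muN.
  have -> : y = x - (x - P s *m x) by rewrite opprB addrC subrK.
  rewrite mulmxBr.
  apply: le_trans (ler_wpM2r (powR_ge0 _ _) (Nsub_le _ _)) _.
  by rewrite mulrDl; apply: lerD; [exact: hC | exact: hC2].
have Py : P s *m y = y by rewrite /y mulmxA hPP.
suff : N y = 0 by move/(N_eq0 hN).
case: (eqVneq (N y) 0) => // Ny0.
have Nyp : 0 < N y by rewrite lt_def Ny0 N_ge0.
pose C' := C + C2.
have K0 : 0 <= K := le_trans ler01 hK.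
have es0 : 0 <= e s := ltW (e_gt0 s).
have C'0 : 0 <= C'.
  apply: le_trans (hy 0 (lexx _)); apply: mulr_ge0; first exact: N_ge0.
  by rewrite invr_ge0 ltW ?e_gt0.
pose Kc := e s * K * mu s `^ alpha * C'.
have Kc0 : 0 <= Kc by rewrite /Kc !mulr_ge0 ?powR_ge0 ?K0 ?es0.
pose eps := N y / (Kc + 1).
have eps0 : 0 < eps by rewrite divr_gt0 // ltr_wpDl.
have hq : 0 < - (alpha + theta) by rewrite oppr_gt0.
have [t [Tt ht]] := mu_small mu_ninfty mu_gt0 (Num.min s 0 - 1) hq eps0.
have [hm1 hm2] : Num.min s 0 <= s /\ Num.min s 0 <= 0 by rewrite !ge_min !lexx ?orbT.
have t0 : t < 0.
  by apply: le_lt_trans Tt _; apply: lt_le_trans hm2; rewrite gtrDl oppr_lt0.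
have ts : t <= s.
  by apply: le_trans Tt _; apply: le_trans _ hm1; rewrite gerDl oppr_le0.
pose w := Phi t s *m y.
have yw : y = Phi s t *m w by rewrite /w mulmxA Phi_co Phi_ss mul1mx.
have Pw : P t *m w = w by rewrite /w mulmxA P_Phi -mulmxA Py.
have hw := hy t (ltW t0); rewrite -/w in hw.
have : N y <= Kc * mu t `^ (- (alpha + theta)).
  have est : 0 <= e s / e t := divr_ge0 es0 (ltW (e_gt0 t)).
  rewrite yw -Pw PhiE -scalemxAl NZ // (ger0_norm est).
  apply: le_trans (ler_wpM2l est (DP w ts)) _.
  rewrite /sgnR ltr0_sg // mulN1r powR_div ?mu_gt0 //.
  have -> : e s / e t * (K * (mu s `^ alpha * mu t `^ (- alpha)) * mu t `^ (- theta) * N w) =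
     (e s * K * mu s `^ alpha) * (mu t `^ (- alpha) * mu t `^ (- theta)) * (N w * (e t)^-1).
    by ring.
  rewrite -powRD ?(gt_eqF (mu_gt0 t)) ?implybT // -opprD.
  rewrite /Kc [X in _ <= X](_ : _ = (e s * K * mu s `^ alpha * mu t `^ (- (alpha + theta))) * C'); last by ring.
  apply: ler_wpM2l; last exact: hw.
  by rewrite !mulr_ge0 ?powR_ge0 ?K0 ?es0.
move=> h; have : N y < N y; last by rewrite ltxx.
apply: (le_lt_trans h).
have -> : N y = (Kc + 1) * eps by rewrite /eps mulrC divfK // gt_eqF // ltr_wpDl.
have [Kc00|Kcp] := eqVneq Kc 0; first by rewrite Kc00 mul0r add0r mul1r.
apply: (@lt_le_trans _ _ (Kc * eps)).
  by rewrite ltr_pM2l // lt_def Kcp Kc0.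
by apply: ler_wpM2r; [exact: ltW | rewrite lerDl].
Qed.

Lemma main_sets :
  U_set N mu Phi gamma = [set p | exists eta, p.2 = P p.1 *m eta] /\
  V_set N mu Phi gamma = [set p | P p.1 *m p.2 = 0].
Proof using All.
split.
  apply/seteqP; split => [[s x] /= hx | [s x] /= [eta ->]].
    by exists x; apply: U_sub hx.
  exact: U_of_P.
apply/seteqP; split => [[s x] /= hx | [s x] /= hx].
  exact: V_sub hx.
exact: V_of_Q hx.
Qed.

End Main.

Unset Implicit Arguments. Set Strict Implicit.


Theorem mainTheorem5 (R : realType) (n : nat) (N : 'cV[R]_n -> R)
  (A : R -> 'M[R]_n) (Phi Psi : R -> R -> 'M[R]_n) (P : R -> 'M[R]_n)
  (mu : R -> R) (gamma : R) :
  (0 < n)%N ->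
  is_norm N ->
  (forall i j, continuous (fun t => A t i j)) ->
  is_evol_op A Phi ->
  diff_growth_rate mu ->
  is_evol_op (fun t => A t - (gamma * ('D_1 mu t) / mu t) *: 1%:M) Psi ->
  nonuniform_mu_dichotomy N mu Psi P ->
  U_set N mu Phi gamma = [set p | exists eta, p.2 = P p.1 *m eta] /\
  V_set N mu Phi gamma = [set p | P p.1 *m p.2 = 0] /\
  fiber_dsum (U_set N mu Phi gamma) (V_set N mu Phi gamma) = setT.
Proof.
move=> n0 hN hA hPhi hmu hPsi
  [hPP [hPc [K [al [be [th [nu [hK [hal [hbe [hth [hnu [hat [hbn [hDP hDQ]]]]]]]]]]]]]]].
have [hU hV] := main_sets n0 hN hA hPhi hmu hPsi hPP hPc hK hal hbe hth hnu hat hbn hDP hDQ.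
split => //; split => //.
rewrite hU hV; apply/seteqP; split => // [[s x]] _ /=; split.
  move=> y [eta /= ->] /= h; move: h; rewrite mulmxA hPP => ->.
  by [].
exists (P s *m x), (x - P s *m x); split; first by exists x.
split; first by rewrite /= mulmxBr mulmxA hPP subrr.
by rewrite addrC subrK.
Qed.
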